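(* Let $(\mathbf x,\mathbf p,\mu)$ be a deterministic TFM satisfying weak UIC and $2$-weak-SCP. Then for every bid vector $\mathbf b$ and users $i,j$ with $x_i(\mathbf b)=1$ and $x_j(\mathbf b)=0$, we have $b_i\ge b_j$. In other words, the confirmed bids are the $k$ highest bids for some $k$ that may depend on $\mathbf b$.
   Context: Setting (TFM). Each user $i$ has a true value $v_i\ge0$ and submits a single bid $b_i\ge0$; $\mathbf b=(b_1,\dots,b_m)$, $\mathbf b_{-i}$ the other bids. A TFM has an inclusion rule (run by the miner, choosing at most $B$ bids) and confirmation, payment, miner-revenue rules (run by the blockchain on included bids); the mechanism treats users symmetrically (swapping two users' positions and bids swaps their outcomes). Composing the honest inclusion rule with the others gives deterministic $(\mathbf x,\mathbf p,\mu)$: $x_i(\mathbf b)\in\{0,1\}$ indicates confirmation, $p_i(\mathbf b)\le b_i$ the payment ($0$ if unconfirmed), $\mu(\mathbf b)$ the miner revenue. Strategic players (a user, the miner, or the miner with some users) may bid untruthfully after seeing all bids, inject fake bids (true value $0$), and (if the miner is involved) include any at most $B$ available bids in any positions. Weak ($1$-strict) utility: miner revenue (if the miner is in the player) plus $v-p$ for each confirmed transaction of the player (true value $v$, payment $p$), minus $(b-v)$ for each unconfirmed transaction of the player with bid $b>v$. Weak UIC: with an honest miner, each user's weak utility is maximized by truthful bidding without fake bids, whatever the other bids. $c$-weak-SCP: for every coalition of the miner with between $1$ and $c$ users, joint weak utility is maximized by truthful bidding and honest miner behavior, whatever the other bids. *)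

(* Defs.v *)
From mathcomp Require Import all_boot all_order all_algebra.
Set Implicit Arguments. Unset Strict Implicit. Unset Printing Implicit Defensive.
Import Order.TTheory GRing.Theory Num.Theory.
Local Open Scope ring_scope.

Section TFMDefs.
Variable R : realFieldType.

(* A bid vector is a [seq R]; user k is the entry at position k.
   A TFM consists of
   - [incl]  : the (honest) inclusion rule run by the miner: given the bid
               vector, the list of indices of included bids, in block order;
   - [conf], [pay], [rev] : the blockchain's confirmation, payment and
               miner-revenue rules, run on the block (the sequence of
               included bids); [conf blk q] / [pay blk q] concern the bid
               at position [q] of the block. *)
Record TFM := MkTFM {
  incl : seq R -> seq nat;
  conf : seq R -> nat -> bool;
  pay  : seq R -> nat -> R;
  rev  : seq R -> R }.

Definition nonneg (b : seq R) : bool := all (fun r => 0 <= r) b.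

Definition valid_incl (M : TFM) (B : nat) : Prop :=
  forall b : seq R, nonneg b ->
    [/\ uniq (incl M b), all (fun k => (k < size b)%N) (incl M b)
      & (size (incl M b) <= B)%N].

Definition blockof (d : seq R) (L : seq nat) : seq R := map (nth 0 d) L.

Definition outx (M : TFM) (d : seq R) (L : seq nat) (k : nat) : bool :=
  (k \in L) && conf M (blockof d L) (index k L).

Definition outp (M : TFM) (d : seq R) (L : seq nat) (k : nat) : R :=
  if outx M d L k then pay M (blockof d L) (index k L) else 0.

Definition outmu (M : TFM) (d : seq R) (L : seq nat) : R :=
  rev M (blockof d L).

Definition xc (M : TFM) (b : seq R) (k : nat) : bool := outx M b (incl M b) k.
Definition pc (M : TFM) (b : seq R) (k : nat) : R := outp M b (incl M b) k.
Definition muc (M : TFM) (b : seq R) : R := outmu M b (incl M b).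

(* Weak (1-strict) utility contribution of one transaction with true value
   [v], bid [bid], confirmation [c], payment [p]. *)
Definition contrib (v bid : R) (c : bool) (p : R) : R :=
  if c then v - p else if v < bid then - (bid - v) else 0.

(* Total weak utility of the transactions [owned] (pairs (index into d,
   true value)) when the block is given by indices [L] into [d]. *)
Definition util (M : TFM) (d : seq R) (L : seq nat) (owned : seq (nat * R)) : R :=
  \sum_(o <- owned) contrib o.2 (nth 0 d o.1) (outx M d L o.1) (outp M d L o.1).

(* Fake bids [f] appended after the [n] real bids, all with true value 0. *)
Definition fakes_owned (n : nat) (f : seq R) : seq (nat * R) :=
  [seq ((n + k)%N, 0) | k <- iota 0 (size f)].

Definition swapn (i j k : nat) : nat :=
  if k == i then j else if k == j then i else k.

Definition symmetric_tfm (M : TFM) : Prop :=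
  forall (b : seq R) (i j : nat), nonneg b -> (i < size b)%N -> (j < size b)%N ->
    let b' := [seq nth 0 b (swapn i j k) | k <- iota 0 (size b)] in
    [/\ forall k, (k < size b)%N -> xc M b' k = xc M b (swapn i j k),
        forall k, (k < size b)%N -> pc M b' k = pc M b (swapn i j k)
      & muc M b' = muc M b].

Definition pay_le_bid (M : TFM) : Prop :=
  forall (b : seq R) (k : nat), nonneg b -> xc M b k -> pc M b k <= nth 0 b k.

(* Weak UIC: honest miner; user i (true value = its entry in b) can change its
   bid to b' and inject fake bids f. *)
Definition weak_UIC (M : TFM) : Prop :=
  forall (b : seq R) (i : nat) (b' : R) (f : seq R),
    nonneg b -> (i < size b)%N -> 0 <= b' -> nonneg f ->
    let d := set_nth 0 b i b' ++ f in
    util M d (incl M d) ((i, nth 0 b i) :: fakes_owned (size b) f)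
      <= util M b (incl M b) [:: (i, nth 0 b i)].

(* c-weak-SCP: miner together with 1..c users S (true values = their entries
   in b); the users change their bids to b', fake bids f are injected, and the
   miner includes any list L of at most B distinct available bids, in any
   order. *)
Definition weak_SCP (M : TFM) (B c : nat) : Prop :=
  forall (b : seq R) (S : seq nat) (b' : nat -> R) (f : seq R) (L : seq nat),
    nonneg b -> uniq S -> all (fun s => (s < size b)%N) S ->
    (1 <= size S <= c)%N ->
    (forall s, s \in S -> 0 <= b' s) -> nonneg f ->
    let d := [seq (if k \in S then b' k else nth 0 b k) | k <- iota 0 (size b)] ++ f in
    uniq L -> all (fun k => (k < size d)%N) L -> (size L <= B)%N ->
    outmu M d L + util M d L ([seq (s, nth 0 b s) | s <- S] ++ fakes_owned (size b) f)
      <= muc M b + util M b (incl M b) [seq (s, nth 0 b s) | s <- S].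

End TFMDefs.

(* Main.v *)
Require Import Defs.
From mathcomp Require Import all_boot all_order all_algebra.
From mathcomp Require Import lra.
Import Order.TTheory GRing.Theory Num.Theory.
Local Open Scope ring_scope.

Lemma swapnK i j : involutive (swapn i j).
Proof.
move=> k; rewrite /swapn.
case: (k =P i) => [->|hki]; first by rewrite eqxx; case: (j =P i).
case: (k =P j) => [->|hkj]; first by rewrite eqxx.
by move/eqP/negPf: hki => ->; move/eqP/negPf: hkj => ->.
Qed.

Lemma swapn_lt i j n k : (i < n)%N -> (j < n)%N -> (k < n)%N -> (swapn i j k < n)%N.
Proof. by rewrite /swapn; case: ifP => _ //; case: ifP. Qed.

Section S.
Variable R : realFieldType.
Variable M : TFM R.

Lemma outx_map (b s : seq R) (L : seq nat) (f : nat -> nat) k :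
  injective f -> (forall k, k \in L -> nth 0 s (f k) = nth 0 b k) ->
  outx M s (map f L) (f k) = outx M b L k /\ outp M s (map f L) (f k) = outp M b L k
  /\ outmu M s (map f L) = outmu M b L.
Proof.
move=> fi hb.
have hbl : blockof s (map f L) = blockof b L.
  by rewrite /blockof -map_comp; apply/eq_in_map => z /hb.
by rewrite /outp /outx /outmu hbl mem_map // index_map.
Qed.
End S.
Theorem mainTheorem15 (R : realFieldType) (B : nat) (M : TFM R) :
  valid_incl M B -> symmetric_tfm M -> pay_le_bid M ->
  weak_UIC M -> weak_SCP M B 2 ->
  forall (b : seq R) (i j : nat), nonneg b ->
    (i < size b)%N -> (j < size b)%N ->
    xc M b i = true -> xc M b j = false ->
    nth 0 b j <= nth 0 b i.
Proof.
move=> hV hS hP hU hC b i j hb hi hj hxi hxj.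
rewrite leNgt; apply/negP => hlt.
set x := nth 0 b i in hlt *; set y := nth 0 b j in hlt *.
have hij : i != j by apply/eqP => e; move: hxi; rewrite e hxj.
have hb0 : forall k, 0 <= nth 0 b k.
  move=> k; case: (ltnP k (size b)) => hk; last by rewrite nth_default.
  by move/allP: hb; apply; rewrite mem_nth.
set e := set_nth 0 b i y.
have hse : size e = size b by rewrite size_set_nth; apply/maxn_idPr.
have hne : forall k, nth 0 e k = if k == i then y else nth 0 b k.
  by move=> k; rewrite nth_set_nth.
have he : nonneg e.
  apply/allP => r /(nthP 0) [k _ <-]; rewrite hne; case: ifP => _; exact: hb0.
set P := pc M b i.
have hPx : P <= x by exact: hP.
have U1 : y - P <= contrib y y (xc M e i) (pc M e i).
  have := hU e i x [::] he; rewrite hse => /(_ hi (hb0 i) isT) /=.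
  have -> : set_nth 0 e i x ++ [::] = b.
    rewrite cats0; apply: (eq_from_nth (x0:=0)).
      by rewrite size_set_nth hse; apply/maxn_idPr.
    move=> k _; rewrite nth_set_nth /=; case: (k =P i) => [->|/eqP nki] //.
    by rewrite hne (negbTE nki).
  rewrite /util !big_cons !big_nil hne eqxx /= addr0 -/(xc M b i) -/(pc M b i) hxi.
  by rewrite /contrib /= addr0.
have hxei : xc M e i.
  case hxe: (xc M e i) => //; move: U1; rewrite hxe /contrib ltxx => h; exfalso; lra.
have hPi : pc M e i <= P by move: U1; rewrite hxei /contrib; lra.
have hxej : xc M e j.
  have [h1 _ _] := hS e i j he (etrans (f_equal _ hse) hi) (etrans (f_equal _ hse) hj).
  have E : [seq nth 0 e (swapn i j k) | k <- iota 0 (size e)] = e.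
    apply: (eq_from_nth (x0:=0)); first by rewrite size_map size_iota.
    move=> k; rewrite size_map size_iota => hk.
    rewrite (nth_map 0%N) ?size_iota // nth_iota // add0n /swapn !hne.
    have hji : (j == i) = false by rewrite eq_sym; exact: negbTE.
    case: (eqVneq k i) => [eki|nki]; first by subst k; rewrite hji.
    case: (eqVneq k j) => [ekj|nkj]; first by subst k; rewrite eqxx.
    by rewrite (negbTE nki).
  by move: (h1 i); rewrite E hse => /(_ hi); rewrite /swapn eqxx => <-.
have [u1 a1 s1] := hV e he.
have hu : uniq [:: i; j] by rewrite /= inE hij.
have ha : all (fun s => (s < size b)%N) [:: i; j] by rewrite /= hi hj.
have := hC b [:: i; j] (fun _ => y) [::] (incl M e) hb hu ha isT (fun _ _ => hb0 j) isT.
move=> /=.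
have E3 : [seq (if k \in [:: i; j] then y else b`_k) | k <- iota 0 (size b)] ++ [::] = e.
  rewrite cats0; apply: (eq_from_nth (x0:=0)); first by rewrite size_map size_iota hse.
  move=> k; rewrite size_map size_iota => hk.
  rewrite (nth_map 0%N) ?size_iota // nth_iota // add0n hne !inE.
  case: (eqVneq k i) => //= _; case: (eqVneq k j) => [->|] //.
rewrite E3 => /(_ u1 a1 s1).
have hei : e`_i = y by rewrite hne eqxx.
have hej : e`_j = y by rewrite hne eq_sym (negbTE hij).
rewrite /util /fakes_owned /= !big_cons !big_nil /= hei hej -/(xc M e i) -/(xc M e j) -/(pc M e i) -/(pc M e j) -/(xc M b i) -/(xc M b j) -/(pc M b i) -/(muc M e) hxei hxej hxi hxj -/x -/y -/P /contrib ltxx /=.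
move=> S3.
have [u2 a2 s2] := hV b hb.
set L' := map (swapn i j) (incl M b).
set d := [seq (if k \in [:: j] then x else e`_k) | k <- iota 0 (size e)] ++ [::].
have hsd : size d = size b by rewrite /d cats0 size_map size_iota hse.
have hu' : uniq L' by rewrite map_inj_uniq //; exact: (can_inj (swapnK i j)).
have ha' : all (fun k => (k < size d)%N) L'.
  rewrite all_map hsd; apply/allP => k hk /=; apply: swapn_lt => //.
  by move/allP: a2 => /(_ k hk).
have hs' : (size L' <= B)%N by rewrite size_map.
have hnd : forall k, (k < size b)%N -> d`_(swapn i j k) = b`_k.
  move=> k hk; rewrite /d cats0 (nth_map 0%N); last by rewrite size_iota hse swapn_lt.
  rewrite nth_iota ?hse ?swapn_lt // add0n inE hne /swapn.
  have hji : (j == i) = false by rewrite eq_sym; exact: negbTE.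
  case: (eqVneq k i) => [->|nki]; first by rewrite eqxx.
  case: (eqVneq k j) => [->|nkj]; first by rewrite (negbTE hij) eqxx.
  by rewrite (negbTE nkj) (negbTE nki).
have hsw : swapn i j i = j by rewrite /swapn eqxx.
have [o1 [o2 o3]] := @outx_map R M b d (incl M b) (swapn i j) i (can_inj (swapnK i j))
   (fun k hk => hnd k (allP a2 k hk)).
rewrite hsw in o1 o2.
have hu1 : uniq [:: j] by [].
have ha1 : all (fun s => (s < size e)%N) [:: j] by rewrite /= hse hj.
have := hC e [:: j] (fun _ => x) [::] L' he hu1 ha1 isT (fun _ _ => hb0 i) isT.
move=> /= /(_ hu' ha' hs'); rewrite -/d.
have hdj : d`_j = x by rewrite -hsw hnd.
rewrite /util /fakes_owned /= !big_cons !big_nil /= hej hdj o1 o2 o3 -/(xc M e j) -/(pc M e j) -/(xc M b i) -/(pc M b i) -/(muc M b) hxej hxi -/P /contrib /=.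
move=> S4; lra.
Qed.
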